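(* Let $H$ be a subdirect product of $H_1 \times H_2$ with projections $\pi_1\colon H \to H_1$ and $\pi_2\colon H \to H_2$. Assume that $N$ is a soluble normal subgroup of $H$ such that $H/N \cong T^\ell$, where $T$ is a nonabelian simple group and $\ell$ is a positive integer. Then there exist integers $\ell_1, \ell_2 \geq 0$ with $\ell_1 + \ell_2 \geq \ell$ such that $H_1/N\pi_1 \cong T^{\ell_1}$ and $H_2/N\pi_2 \cong T^{\ell_2}$.
   Context: $H$ is a subdirect product of $H_1\times H_2$ means $H \leq H_1\times H_2$ and both coordinate projections restricted to $H$ are surjective. $N\pi_i$ denotes the image of $N$ under $\pi_i$. *)

(* Defs.v *)
From mathcomp Require Import all_boot all_fingroup all_solvable.

(* Main.v *)
Require Import Defs.
From mathcomp Require Import all_boot all_fingroup all_solvable.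
Set Implicit Arguments. Unset Strict Implicit. Unset Printing Implicit Defensive.
Local Open Scope group_scope.

Lemma centerT1 (gT : finGroupType) (T : {group gT}) :
  simple T -> ~~ abelian T -> 'Z(T) = 1.
Proof.
move=> /simpleP[_ simT] nab.
case: (simT _ (center_normal T)) => // ZT.
by case/negP: nab; rewrite /abelian -{1}ZT subsetIr.
Qed.

Lemma step1 (gT : finGroupType) (T : {group gT}) (l : nat)
  (M : {group {dffun forall i : 'I_l, gT}}) :
  simple T -> ~~ abelian T -> M <| setXn (fun _ : 'I_l => T) ->
  forall f i, f \in M -> f i != 1 -> @set1gXn _ (fun _ => gT) i T \subset M.
Proof.
move=> simT nab nsM f i fM fi1.
have sMG := normal_sub nsM.
have fG : f \in setXn (fun _ : 'I_l => T) by apply: (subsetP sMG).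
have fiT : f i \in T by move/setXnP: fG.
set X := @groupXn1 _ (fun _ => gT) i T.
have sXG : X \subset setXn (fun _ : 'I_l => T).
  rewrite /= set1gXnE; apply: setXnS => j; case: dfwithP => // k _.
  by rewrite sub1G.
have simX : simple X by rewrite -(isog_simple (isog_setXn _)).
have nsD : X :&: M <| X := normalGI sXG nsM.
case/simpleP: simX => _ /(_ _ nsD) [D1|DX]; last first.
  by rewrite -DX subsetIr.
exfalso.
have : f i \in 'Z(T).
  rewrite inE fiT /=; apply/centP => t tT.
  have gX : (@dfung1 _ (fun _ => gT) i t) \in X.
    rewrite /X /=. apply/set1gXnP; by exists t.
  have gG : (@dfung1 _ (fun _ => gT) i t) \in setXn (fun _ : 'I_l => T) by exact: (subsetP sXG _ gX).
  have cM : [~ f, (@dfung1 _ (fun _ => gT) i t)] \in M.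
    rewrite /commg groupM ?groupV // memJ_norm //.
    by apply: (subsetP (normal_norm nsM)).
  have cX : [~ f, (@dfung1 _ (fun _ => gT) i t)] \in X.
    rewrite /X /=; apply/set1gXnP; exists [~ f i, t]; first by rewrite groupR.
    apply/ffunP => j; rewrite /commg /conjg !(mulg_ffun, invg_ffun).
    have [<-|ij] := eqVneq i j; first by rewrite !dfung1_id.
    rewrite !dfung1_dflt // invg1 !mulg1. by rewrite mul1g mulVg.
  have : [~ f, (@dfung1 _ (fun _ => gT) i t)] \in X :&: M by rewrite inE cX.
  rewrite D1 => /set1P /ffunP /(_ i).
  rewrite /commg /conjg !(mulg_ffun, invg_ffun) dfung1_id oneg_ffun.
  by move=> h; apply/commgP/eqP.
by rewrite centerT1 // => /set1P fi; rewrite fi eqxx in fi1.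
Qed.

Lemma suppM (gT : finGroupType) (T : {group gT}) (l : nat)
  (M : {group {dffun forall i : 'I_l, gT}}) (P : pred 'I_l) :
  (forall i, P i -> @set1gXn _ (fun _ => gT) i T \subset M) ->
  forall f, f \in setXn (fun _ : 'I_l => T) -> (forall i, ~~ P i -> f i = 1) -> f \in M.
Proof.
move=> hP f.
move: {2}#|[set j | f j != 1]| (leqnn #|[set j | f j != 1]|) => n.
elim: n f => [|n IH] f.
  rewrite leqn0 => /eqP/cards0_eq/setP s0 _ _.
  have -> : f = 1.
    by apply/ffunP => j; move: (s0 j); rewrite !inE ffunE => /negbFE/eqP.
  exact: group1.
case: (set_0Vmem [set j | f j != 1]) => [s0 _ fG fP|[j]].
  have -> : f = 1.
    by apply/ffunP => i; move/setP: s0 => /(_ i); rewrite !inE ffunE => /negbFE/eqP.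
  exact: group1.
rewrite inE => fj1 hcard fG fP.
have Pj : P j by case: (boolP (P j)) => // /fP fj; rewrite fj eqxx in fj1.
have gX : @dfung1 _ (fun _ => gT) j (f j) \in @set1gXn _ (fun _ => gT) j T.
  by apply/set1gXnP; exists (f j) => //; move/setXnP: fG.
have gM := subsetP (hP j Pj) _ gX.
have gG : @dfung1 _ (fun _ => gT) j (f j) \in setXn (fun _ : 'I_l => T).
  move: gX; rewrite set1gXnE => /setXnP gX; apply/setXnP => i.
  by move: (gX i); case: dfwithP => // k _ /set1P ->; rewrite group1.
set f' := f * (@dfung1 _ (fun _ => gT) j (f j))^-1.
have -> : f = f' * @dfung1 _ (fun _ => gT) j (f j) by rewrite /f' mulgKV.
rewrite groupM // IH //.
- have -> : [set i | f' i != 1] = [set i | f i != 1] :\ j.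
    apply/setP => i; rewrite !inE /f' mulg_ffun invg_ffun.
    have [<-|ji] := eqVneq j i; first by rewrite dfung1_id mulgV eqxx.
    rewrite dfung1_dflt // invg1 mulg1; case: eqVneq ji => // ->; by rewrite eqxx in ji.
  move: hcard; rewrite (cardsD1 j) inE fj1 /=.
  by rewrite ltnS.
- by rewrite groupM ?groupV.
- move=> i Pi; rewrite /f' mulg_ffun invg_ffun.
  have [<-|ji] := eqVneq j i; first by rewrite dfung1_id mulgV.
  by rewrite dfung1_dflt // invg1 mulg1 fP.
Qed.

Lemma quotXn (gT : finGroupType) (T : {group gT}) (l : nat)
  (M : {group {dffun forall i : 'I_l, gT}}) :
  simple T -> ~~ abelian T -> M <| setXn (fun _ : 'I_l => T) ->
  exists k, setXn (fun _ : 'I_l => T) / M \isog setXn (fun _ : 'I_k => T).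
Proof.
move=> simT nab nsM.
set G := setXn (fun _ : 'I_l => T).
pose S := [set i : 'I_l | @set1gXn _ (fun _ => gT) i T \subset M].
pose C := ~: S.
exists #|C|.
pose p (f : {dffun forall i : 'I_l, gT}) : {dffun forall j : 'I_#|C|, gT} :=
  [ffun j => f (enum_val j)].
have pM : {morph p : x y / x * y}.
  by move=> x y; apply/ffunP => j; rewrite !ffunE.
pose pm := @Morphism _ _ [set: _] p (in2W pM).
have := first_isog_loc pm (subsetT G).
have -> : 'ker_G pm = M.
  apply/setP => f; rewrite !inE /=.
  apply/idP/idP.
    case/andP => fG /eqP pf1; apply: (@suppM _ T l M (fun i => i \in S)).
    - by move=> i; rewrite inE.
    - by rewrite in_setXn.
    move=> i iS.
    have iC : i \in C by rewrite inE.
    move/ffunP: pf1 => /(_ (enum_rank_in iC i)).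
    by rewrite !ffunE enum_rankK_in.
  move=> fM; have fG : f \in G by apply: (subsetP (normal_sub nsM)).
  apply/andP; split; first by rewrite -in_setXn.
  apply/eqP/ffunP => j; rewrite !ffunE.
  apply/eqP; apply/negP => /negP fj1.
  have := step1 simT nab nsM fM fj1.
  have : enum_val j \in C by apply: enum_valP.
  by rewrite !inE => /negP.
have -> : pm @* G = setXn (fun _ : 'I_#|C| => T).
  rewrite morphimEsub ?subsetT //; apply/setP => g; apply/imsetP/setXnP.
    case=> f fG -> j; rewrite /= ffunE; by move/setXnP: fG.
  move=> gT'.
  exists [ffun i => if [pick j | enum_val j == i] is Some j then g j else 1].
    apply/setXnP => i; rewrite ffunE; case: pickP => [j _|_]; by rewrite ?group1.
  apply/ffunP => j; rewrite /= !ffunE.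
  case: pickP => [j' /eqP /enum_val_inj -> //|/(_ j)]; by rewrite eqxx.
by [].
Qed.

Lemma abXn (gT : finGroupType) (T : {group gT}) (l : nat)
  (M : {group {dffun forall i : 'I_l, gT}}) :
  simple T -> ~~ abelian T -> M <| setXn (fun _ : 'I_l => T) ->
  abelian M -> M :=: 1.
Proof.
move=> simT nab nsM abM; apply/trivgP; apply/subsetP => f fM; apply/set1P.
apply/ffunP => i; rewrite oneg_ffun; apply/eqP/negP => /negP fi1.
have sXM := step1 simT nab nsM fM fi1.
have := abelianS sXM abM.
by rewrite -(isog_abelian (isog_setXn _)) (negbTE nab).
Qed.

Lemma transfer (gT rT : finGroupType) (T : {group gT}) (l : nat)
  (Q M : {group rT}) :
  simple T -> ~~ abelian T -> Q \isog setXn (fun _ : 'I_l => T) -> M <| Q ->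
  (exists k, Q / M \isog setXn (fun _ : 'I_k => T)) /\ (abelian M -> M :=: 1).
Proof.
move=> simT nab /isogP[phi injphi imphi] nsM.
have nsM' : phi @* M <| setXn (fun _ : 'I_l => T).
  by rewrite -imphi; apply: morphim_normal.
split.
  have [k hk] := quotXn simT nab nsM'.
  exists k; apply: isog_trans hk.
  apply/isogP; exists (quotm_morphism phi nsM); first exact: injm_quotm.
  by rewrite morphim_quotm imphi.
move=> abM; apply/eqP.
rewrite -(morphim_injm_eq1 injphi (normal_sub nsM)); apply/eqP.
by apply: (abXn simT nab nsM'); apply: morphim_abelian.
Qed.

Lemma side (aT rT gT : finGroupType) (H N : {group aT}) (f : {morphism H >-> rT})
  (T : {group gT}) (l : nat) :
  N <| H -> simple T -> ~~ abelian T -> H / N \isog setXn (fun _ : 'I_l => T) ->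
  exists k, f @* H / f @* N \isog setXn (fun _ : 'I_k => T) /\
            (H / N) / ('ker f / N) \isog setXn (fun _ : 'I_k => T).
Proof.
move=> nsN simT nab iso.
have nsK : 'ker f <| H := ker_normal f.
have nsL : N <*> 'ker f <| H := normalY nsN nsK.
have nsA : 'ker f / N <| H / N := quotient_normal N nsK.
have [[k hk] _] := transfer simT nab iso nsA.
exists k; split=> //.
have e3 := third_isog (joing_subl N ('ker f)) nsN nsL.
rewrite quotientYidl in e3; last first.
  exact: subset_trans (normal_sub nsK) (normal_norm nsN).
apply: (isog_trans _ hk); rewrite isog_sym; apply: (isog_trans e3).
have eL : f @* (N <*> 'ker f) = f @* N.
  by rewrite morphimY ?normal_sub // morphim_ker joingG1.
rewrite -eL.
apply/isogP; exists (quotm_morphism f nsL); last by rewrite morphim_quotm.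
rewrite /= ker_quotm quotient_sub1 ?joing_subr //.
exact: subset_trans (normal_sub nsK) (normal_norm nsL).
Qed.

Lemma cardXn (gT : finGroupType) (T : {group gT}) (k : nat) :
  #|setXn (fun _ : 'I_k => T)| = (#|T| ^ k)%N.
Proof. by rewrite cardsXn prod_nat_const card_ord. Qed.

Lemma commK (gT1 gT2 : finGroupType) (x y : (gT1 * gT2)%type) :
  x.1 = 1 -> y.2 = 1 -> commute x y.
Proof.
case: x y => [a b] [c d] /= -> ->.
rewrite /commute; change ((1 * c, b * 1) = (c * 1, 1 * b)); by rewrite !mulg1 !mul1g.
Qed.

Theorem lemma2p5 (gT1 gT2 gT : finGroupType)
  (H1 : {group gT1}) (H2 : {group gT2}) (H N : {group (gT1 * gT2)%type})
  (T : {group gT}) (l : nat) :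
  H \subset setX H1 H2 ->
  (@fst_morphism gT1 gT2) @* H = H1 ->
  (@snd_morphism gT1 gT2) @* H = H2 ->
  N <| H -> solvable N ->
  simple T -> ~~ abelian T -> (0 < l)%N ->
  H / N \isog setXn (fun _ : 'I_l => T) ->
  exists l1 l2 : nat,
    [/\ (l <= l1 + l2)%N,
        H1 / ((@fst_morphism gT1 gT2) @* N) \isog setXn (fun _ : 'I_l1 => T) &
        H2 / ((@snd_morphism gT1 gT2) @* N) \isog setXn (fun _ : 'I_l2 => T)].
Proof.
move=> sH e1 e2 nsN _ simT nab _ iso.
pose f1 := restrm (subsetT H) (@fst_morphism gT1 gT2).
pose f2 := restrm (subsetT H) (@snd_morphism gT1 gT2).
have [k1 [i1 q1]] := side f1 nsN simT nab iso.
have [k2 [i2 q2]] := side f2 nsN simT nab iso.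
have fH1 : f1 @* H = H1 by rewrite morphim_restrm setIid e1.
have fH2 : f2 @* H = H2 by rewrite morphim_restrm setIid e2.
have fN1 : f1 @* N = (@fst_morphism gT1 gT2) @* N.
  by rewrite morphim_restrm (setIidPr (normal_sub nsN)).
have fN2 : f2 @* N = (@snd_morphism gT1 gT2) @* N.
  by rewrite morphim_restrm (setIidPr (normal_sub nsN)).
exists k1, k2; split; last first.
- by rewrite -fH2 -fN2.
- by rewrite -fH1 -fN1.
have nsA1 : 'ker f1 / N <| H / N := quotient_normal N (ker_normal f1).
have nsA2 : 'ker f2 / N <| H / N := quotient_normal N (ker_normal f2).
have nKN1 : 'ker f1 \subset 'N(N).
  exact: subset_trans (normal_sub (ker_normal f1)) (normal_norm nsN).
have nKN2 : 'ker f2 \subset 'N(N).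
  exact: subset_trans (normal_sub (ker_normal f2)) (normal_norm nsN).
have cK : 'ker f1 \subset 'C('ker f2).
  apply/centsP => x xK y yK; apply: commK.
    by have := mker xK.
  by have := mker yK.
have cA : 'ker f1 / N \subset 'C('ker f2 / N).
  by apply/commG1P; rewrite -quotientR // (commG1P cK) quotient1.
have nsI : ('ker f1 / N) :&: ('ker f2 / N) <| H / N := normalI nsA1 nsA2.
have [_ triv] := transfer simT nab iso nsI.
have I1 : ('ker f1 / N) :&: ('ker f2 / N) = 1.
  apply: triv; rewrite /abelian.
  apply: subset_trans (subsetIl _ _) _; apply: subset_trans cA _.
  by apply: centS; apply: subsetIr.
have cQ : #|H / N| = (#|T| ^ l)%N by rewrite (card_isog iso) cardXn.
have cQ1 : #|H / N| = (#|T| ^ k1 * #|'ker f1 / N|)%N.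
  rewrite -(Lagrange (normal_sub nsA1)) -card_quotient ?normal_norm //.
  by rewrite (card_isog q1) cardXn mulnC.
have cQ2 : #|H / N| = (#|T| ^ k2 * #|'ker f2 / N|)%N.
  rewrite -(Lagrange (normal_sub nsA2)) -card_quotient ?normal_norm //.
  by rewrite (card_isog q2) cardXn mulnC.
have cAB : (#|'ker f1 / N| * #|'ker f2 / N| <= #|H / N|)%N.
  rewrite mul_cardG I1 cards1 muln1.
  by apply: subset_leq_card; apply: mul_subG; apply: normal_sub.
have t1 : (1 < #|T|)%N by rewrite cardG_gt1; case/simpleP: simT.
rewrite -(leq_exp2l _ _ t1) expnD.
have q0 : (0 < #|H / N|)%N by rewrite cardG_gt0.
rewrite -cQ -(leq_pmul2r q0).
apply: (@leq_trans (#|T| ^ k1 * #|T| ^ k2 * (#|'ker f1 / N| * #|'ker f2 / N|))%N).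
  by rewrite {1}cQ1 cQ2 mulnACA.
by rewrite leq_mul2l cAB orbT.
Qed.
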